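(* Let $\mathsf{X},\mathsf{Y}$ be Polish spaces and $c:\mathsf{X}\times\mathsf{Y}\to[0,\infty)$ continuous. Given a nonempty $c$-cyclically monotone set $\Gamma\subseteq\mathsf{X}\times\mathsf{Y}$, define $$I(x,y):=\sup_{k\ge2}\ \sup_{(x_i,y_i)_{i=2}^k\subset\Gamma}\ \sup_{\sigma\in\Sigma(k)}\ \sum_{i=1}^k c(x_i,y_i)-\sum_{i=1}^k c(x_i,y_{\sigma(i)}),\qquad (x_1,y_1):=(x,y).$$ Then $I:\mathsf{X}\times\mathsf{Y}\to[0,\infty]$ is lower semicontinuous and $I=0$ on $\Gamma$. Moreover, $$I(x,y)\ge\sup_{k\ge2}\ \sup_{(x_i,y_i)_{i=2}^k\subset\Gamma}\ \sum_{i=1}^k c(x_i,y_i)-\sum_{i=1}^k c(x_i,y_{i+1})\quad(y_{k+1}:=y_1),$$ and equality holds as soon as $x\in\mathsf{X}_0:=\operatorname{proj}_{\mathsf{X}}\Gamma$ or $y\in\mathsf{Y}_0:=\operatorname{proj}_{\mathsf{Y}}\Gamma$.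
   Context: $\Sigma(k)$ denotes the set of permutations of $\{1,\dots,k\}$. A set $\Gamma\subset\mathsf{X}\times\mathsf{Y}$ is $c$-cyclically monotone if $\sum_{i=1}^k c(x_i,y_i)\le\sum_{i=1}^k c(x_i,y_{i+1})$ for all $k\ge1$ and $(x_i,y_i)\in\Gamma$, with $y_{k+1}:=y_1$. *)

(* Defs.v *)
From HB Require Import structures.
From mathcomp Require Import all_boot all_order all_algebra all_fingroup.
From mathcomp Require Import all_classical all_reals all_analysis.
Set Implicit Arguments. Unset Strict Implicit. Unset Printing Implicit Defensive.
Import Order.TTheory GRing.Theory Num.Theory.
Import numFieldNormedType.Exports.
Local Open Scope classical_set_scope.
Local Open Scope ring_scope.

Definition polish (R : realType) (T : topologicalType) : Prop :=
  (exists d : T -> T -> R,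
     (forall x y, 0 <= d x y) /\
     (forall x y, d x y = 0 <-> x = y) /\
     (forall x y, d x y = d y x) /\
     (forall x y z, d x z <= d x y + d y z) /\
         (forall A : set T, open A <->
            (forall x, A x -> exists2 e : R, 0 < e & [set y | d x y < e] `<=` A)) /\
         (forall u : nat -> T,
            (forall e : R, 0 < e -> exists N, forall m n, (N <= m)%N -> (N <= n)%N ->
                d (u m) (u n) < e) ->
            exists l : T, forall e : R, 0 < e -> exists N, forall n, (N <= n)%N ->
                d l (u n) < e))
  /\ (exists S : set T, countable S /\ dense S).

Definition c_cyc_monotone (R : realType) (X Y : Type) (c : X * Y -> R)
  (Gam : set (X * Y)) : Prop :=
  forall (k : nat) (p : 'I_k.+1 -> X * Y), (forall i, Gam (p i)) ->
    \sum_(i < k.+1) c (p i) <= \sum_(i < k.+1) c ((p i).1, (p (ordS i)).2).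

Local Open Scope ereal_scope.

(* I(x,y): sup over k >= 2 (k = n.+2), points p_1 = (x,y), p_2..p_k in Gamma,
   and permutations sigma of {1..k}. *)
Definition Ifun (R : realType) (X Y : Type) (c : X * Y -> R)
  (Gam : set (X * Y)) (z : X * Y) : \bar R :=
  ereal_sup [set r | exists (n : nat) (p : 'I_n.+2 -> X * Y) (s : 'S_n.+2),
     [/\ p ord0 = z, (forall i, i != ord0 -> Gam (p i)) &
         r = (\sum_(i < n.+2) c (p i) - \sum_(i < n.+2) c ((p i).1, (p (s i)).2))%R%:E]].

Definition Icyc (R : realType) (X Y : Type) (c : X * Y -> R)
  (Gam : set (X * Y)) (z : X * Y) : \bar R :=
  ereal_sup [set r | exists (n : nat) (p : 'I_n.+2 -> X * Y),
     [/\ p ord0 = z, (forall i, i != ord0 -> Gam (p i)) &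
         r = (\sum_(i < n.+2) c (p i) - \sum_(i < n.+2) c ((p i).1, (p (ordS i)).2))%R%:E]].

(* Main.v *)
Require Import Defs.
From HB Require Import structures.
From mathcomp Require Import all_boot all_order all_algebra all_fingroup.
From mathcomp Require Import all_classical all_reals all_analysis.
From mathcomp Require Import zify lra.
Import Order.TTheory GRing.Theory Num.Theory.
Import numFieldNormedType.Exports.
Local Open Scope classical_set_scope.
Local Open Scope ring_scope.

Lemma iter_porbit_mod (T : finType) (s : {perm T}) a j :
  iter (j %% #|porbit s a|) s a = iter j s a.
Proof.
set m := #|porbit s a|.
rewrite {2}(divn_eq j m) addnC iterD iterM.
suff -> : forall q, iter q (iter m s) a = a by [].
by elim=> [//|q IH]; rewrite iterS IH iter_porbit.
Qed.

Lemma sum_porbit (R : realType) (T : finType) (s : {perm T}) a (F : T -> R) :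
  \sum_(i in porbit s a) F i = \sum_(j < #|porbit s a|) F (iter j s a).
Proof.
rewrite (eq_bigl (mem (traject s a #|porbit s a|))); last first.
  by move=> i; rewrite /= porbit_traject.
rewrite -big_uniq ?uniq_traject_porbit //= (big_nth a) size_traject big_mkord.
by apply: eq_bigr => j _; rewrite nth_traject.
Qed.

Lemma sum_porbit_cyc (R : realType) (X Y : Type) (c : X * Y -> R)
  (T : finType) (s : {perm T}) (P : T -> X * Y) a k (hk : #|porbit s a| = k.+1) :
  \sum_(i in porbit s a) (c (P i) - c ((P i).1, (P (s i)).2)) =
  \sum_(j < k.+1) c (P (iter j s a)) -
  \sum_(j < k.+1) c ((P (iter j s a)).1, (P (iter (ordS j) s a)).2).
Proof.
rewrite sum_porbit sumrB hk; congr (_ - _); apply: eq_bigr => j _.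
have -> : (ordS j : nat) = (j.+1 %% #|porbit s a|)%N by rewrite hk.
by rewrite iter_porbit_mod.
Qed.

Lemma cyc_perm (R : realType) (X Y : Type) (c : X * Y -> R) (Gam : set (X * Y))
  (hG : c_cyc_monotone c Gam) (T : finType) (s : {perm T}) (P : T -> X * Y) :
  forall A : {set T}, (forall i, i \in A -> s i \in A) ->
  (forall i, i \in A -> Gam (P i)) ->
  \sum_(i in A) (c (P i) - c ((P i).1, (P (s i)).2)) <= 0.
Proof.
move=> A; move: {2}#|A| (leqnn #|A|) => N; elim: N A => [|N IH] A hN hA hP.
  by move: hN; rewrite leqn0 cards_eq0 => /eqP ->; rewrite big_set0.
case: (set_0Vmem A) => [->|[a aA]]; first by rewrite big_set0.
set O := porbit s a.
have OA : forall i, i \in O -> i \in A.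
  move=> i /porbitP [j ->]; elim: j => [|j IHj]; first by rewrite expg0 perm1.
  by rewrite expgSr permM hA.
rewrite (big_setID O) /=.
have -> : A :&: O = O by apply/setP => i; rewrite inE; case iO: (i \in O); rewrite ?andbF ?andbT ?OA.
rewrite -[X in _ <= X](addr0 0); apply: lerD.
  have [k hk] : exists k, #|O| = k.+1.
    by move: (card_porbit_neq0 s a); rewrite -/O; case: #|O| => // k _; exists k.
  rewrite /O (@sum_porbit_cyc _ _ _ c _ s P a k hk) subr_le0; apply: hG => j.
  by apply: hP; apply: OA; rewrite -permX mem_porbit.
apply: IH.
- have := cardsID O A; have : a \in A :&: O by rewrite inE aA porbit_id.
  move=> aAO; have : (0 < #|A :&: O|)%N by apply/card_gt0P; exists a.
  move: hN; lia.
- move=> i; rewrite !inE => /andP [iO iA]; rewrite hA // andbT.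
  apply: contra iO => siO.
  have : a \in porbit s i by rewrite -(porbit_perm s 1) expg1 porbit_sym.
  by rewrite porbit_sym.
- by move=> i; rewrite inE => /andP [_ /hP].
Qed.

Lemma cont_pair (T X Y : topologicalType) (f : T -> X) (g : T -> Y) :
  continuous f -> continuous g -> continuous (fun t => (f t, g t)).
Proof. by move=> cf cg t; apply: cvg_pair; [exact: cf | exact: cg]. Qed.

Lemma cont_fst (X Y : topologicalType) : continuous (fun w : X * Y => w.1).
Proof. by move=> w; exact: cvg_fst. Qed.

Lemma cont_snd (X Y : topologicalType) : continuous (fun w : X * Y => w.2).
Proof. by move=> w; exact: cvg_snd. Qed.

Lemma cont_sum (R : realType) (T : topologicalType) n (F : 'I_n -> T -> R) :
  (forall i, continuous (F i)) -> continuous (fun t => \sum_(i < n) F i t).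
Proof.
move=> hF; apply: continuous_big => [|i _]; last exact: hF.
exact: add_continuous.
Qed.

Theorem lemma4p2 (R : realType) (X Y : topologicalType)
  (hX : polish R X) (hY : polish R Y)
  (c : X * Y -> R) (hc : continuous c) (hc0 : forall z, 0 <= c z)
  (Gam : set (X * Y)) (hG0 : Gam !=set0) (hG : c_cyc_monotone c Gam) :
  [/\ lower_semicontinuous (Ifun c Gam),
      (forall z, (0 <= Ifun c Gam z)%E),
      (forall z, Gam z -> Ifun c Gam z = 0%E),
      (forall z, (Icyc c Gam z <= Ifun c Gam z)%E) &
      (forall x y, (fst @` Gam) x \/ (snd @` Gam) y ->
         Ifun c Gam (x, y) = Icyc c Gam (x, y))].
Proof.
have ge0 : forall z, (0 <= Ifun c Gam z)%E.
  move=> z; case: hG0 => w Gw; apply: ereal_sup_ubound.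
  exists 0%N, (fun i : 'I_2 => if i == ord0 then z else w), 1%g; split.
  - by rewrite eqxx.
  - by move=> i /negbTE ->.
  - congr EFin; apply/esym/eqP; rewrite subr_eq0; apply/eqP; apply: eq_bigr => i _.
    by rewrite perm1 -surjective_pairing.
have part4 : forall z, (Icyc c Gam z <= Ifun c Gam z)%E.
  move=> z; apply: ereal_sup_le => r [n [p [p0 pG ->]]].
  exists n, p, (perm (@ordS_inj n.+2)); split => //.
  by congr EFin; congr (_ - _); apply: eq_bigr => i _; rewrite permE.
split => //.
- move=> z a /ereal_sup_gt [r [n [p [s [p0 pG ->]]]] ar].
  pose pw (w : X * Y) (i : 'I_n.+2) := if i == ord0 then w else p i.
  pose F w := \sum_(i < n.+2) c (pw w i) - \sum_(i < n.+2) c ((pw w i).1, (pw w (s i)).2).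
  have pwz : pw z =1 p by move=> i; rewrite /pw; case: eqP => // ->.
  have Fz : F z = \sum_(i < n.+2) c (p i) - \sum_(i < n.+2) c ((p i).1, (p (s i)).2).
    by rewrite /F; congr (_ - _); apply: eq_bigr => i _; rewrite !pwz.
  have cF : continuous F.
    move=> w; apply: cvgB.
      apply: cont_sum => i; rewrite /pw; case: (i == ord0); [exact: hc | exact: cst_continuous].
    apply: cont_sum => i.
    have cp : continuous (fun w => ((pw w i).1, (pw w (s i)).2)).
      apply: cont_pair; rewrite /pw; [case: (i == ord0) | case: (s i == ord0)];
        by [exact: cont_fst | exact: cst_continuous | exact: cont_snd].
    by move=> t; apply: continuous_comp (cp t) (hc _).
  rewrite lte_fin -Fz in ar.
  have hnear := cvgr_gt (F z) (cF z) a ar.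
  exists (fun t => a < F t); first exact: hnear.
  move=> t /= hat.
  apply: (@lt_le_trans _ _ (F t)%:E); first by rewrite lte_fin.
  apply: ereal_sup_ubound; exists n, (pw t), s; split => //.
  by move=> i i0; rewrite /pw (negbTE i0); apply: pG.
- move=> z Gz; apply/eqP; rewrite eq_le ge0 andbT.
  apply: ge_ereal_sup => r [n [p [s [p0 pG ->]]]].
  rewrite lee_fin -sumrB.
  rewrite (eq_bigl (fun i => i \in [set: 'I_n.+2]%SET)); last by move=> i; rewrite inE.
  refine (@cyc_perm R X Y c Gam hG 'I_n.+2 s p [set: 'I_n.+2]%SET _ _) => // i _.
  by case: (eqVneq i ord0) => [->|/pG //]; rewrite p0.
- move=> x y hxy.
  have Icyc0 : (0 <= Icyc c Gam (x, y))%E.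
    case: hxy => [[[a b] Gw /= ax] | [[a b] Gw /= ay]]; apply: ereal_sup_ubound.
    + subst a; exists 0%N, (fun i : 'I_2 => if i == ord0 then (x, y) else (x, b)).
      split => //; first by move=> i /negbTE ->.
      by congr EFin; rewrite !big_ord_recr !big_ord0 /=; lra.
    + subst b; exists 0%N, (fun i : 'I_2 => if i == ord0 then (x, y) else (a, y)).
      split => //; first by move=> i /negbTE ->.
      by congr EFin; rewrite !big_ord_recr !big_ord0 /=; lra.
  apply/eqP; rewrite eq_le part4 andbT.
  apply: ge_ereal_sup => r [n [p [s [p0 pG ->]]]].
  set O := porbit s ord0.
  rewrite -sumrB (bigID (mem O)) /=.
  have rest : \sum_(i | ~~ (i \in O)) (c (p i) - c ((p i).1, (p (s i)).2)) <= 0.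
    rewrite (eq_bigl (fun i => i \in ~: O)); last by move=> i; rewrite inE.
    apply: (@cyc_perm R X Y c Gam hG 'I_n.+2 s p (~: O)) => i; rewrite inE => iO.
    - rewrite inE; apply: contra iO => siO.
      have : ord0 \in porbit s i by rewrite -(porbit_perm s 1) expg1 porbit_sym.
      by rewrite porbit_sym.
    - apply: pG; apply: contra iO => /eqP ->; exact: porbit_id.
  apply: (@le_trans _ _ (\sum_(i in O) (c (p i) - c ((p i).1, (p (s i)).2)))%:E).
    by rewrite lee_fin -[X in _ <= X]addr0 lerD2l.
  have [k hk] : exists k, #|O| = k.+1.
    by move: (card_porbit_neq0 s ord0); rewrite -/O; case: #|O| => // k _; exists k.
  rewrite /O (@sum_porbit_cyc _ _ _ c _ s p ord0 k hk).
  case: k hk => [|k] hk.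
    rewrite !big_ord1.
    have -> : iter (ordS (ord0 : 'I_1)) s ord0 = iter 0 s ord0 by [].
    by rewrite /= -surjective_pairing subrr.
  apply: ereal_sup_ubound; exists k, (fun j : 'I_k.+2 => p (iter j s ord0)); split => //.
  move=> j j0; apply: pG.
  have U := uniq_traject_porbit s ord0; rewrite -/O hk in U.
  have hj : (j < size (traject s ord0 k.+2))%N by rewrite size_traject.
  have h0 : (0 < size (traject s ord0 k.+2))%N by rewrite size_traject.
  move: (nth_uniq ord0 hj h0 U); rewrite !nth_traject // => E.
  by rewrite /= in E; rewrite E.
Qed.
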